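(* Let $S=\{a_0,a_1,a_2,\ldots\}$ and $T=\{b_0,b_1,b_2,\ldots\}$ be sets of positive integers listed in strictly increasing order ($a_i<a_{i+1}$, $b_i<b_{i+1}$), such that $a_i\geq b_i$ for all $i\geq 0$ (if $S$ is finite, this is required for all indices $i$ for which $a_i$ is defined, and $T$ has at least as many elements). Then for all $n\geq 1$, $$r_S(n)\leq r_T(n).$$
   Context: A partition is a finite nonincreasing sequence of positive integers (its parts); its size is not fixed. The perimeter of a partition with largest part $\alpha$ and $\lambda$ parts is $\alpha+\lambda-1$. For a set $X$ of positive integers, $r_X(n)$ denotes the number of partitions of perimeter $n$ all of whose parts lie in $X$. *)

(* Defs.v *)
From mathcomp Require Import all_boot.
Set Implicit Arguments. Unset Strict Implicit. Unset Printing Implicit Defensive.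

Definition is_partition (s : seq nat) : bool :=
  sorted geq s && all (fun x => 0 < x) s.

Definition largest_part (s : seq nat) : nat := foldr maxn 0 s.

Definition perimeter (s : seq nat) : nat := (largest_part s + size s).-1.

Fixpoint all_seqs (len m : nat) : seq (seq nat) :=
  match len with
  | 0 => [:: [::]]
  | l.+1 => [seq x :: s | x <- iota 1 m, s <- all_seqs l m]
  end.

(* Candidate sequences: length 1..n, entries in 1..n.  Every partition of
   perimeter n >= 1 has largest part <= n and at most n parts, so it occurs
   exactly once in this list. *)
Definition candidates (n : nat) : seq (seq nat) :=
  flatten [seq all_seqs len n | len <- iota 1 n].

Definition r (X : pred nat) (n : nat) : nat :=
  count (fun s => [&& is_partition s, all X s & perimeter s == n]) (candidates n).

(* x is the i-th smallest element (0-indexed) of X, i.e. x = a_i *)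
Definition is_nth (X : pred nat) (i x : nat) : bool :=
  X x && (count X (iota 0 x) == i).

(* Main.v *)
Require Import Defs.
From mathcomp Require Import all_boot zify.

Lemma mem_all_seqs l m s :
  (s \in all_seqs l m) = (size s == l) && all (fun x => 0 < x <= m) s.
Proof.
elim: l s => [|l IH] s /=.
  by case: s => [|x s] //=; rewrite inE.
apply/allpairsP/idP.
  case=> [[x t]] /= [hx ht ->] /=.
  rewrite mem_iota in hx. rewrite IH in ht.
  case/andP: ht => /eqP -> ->. rewrite eqxx /=. apply/andP; split=>//; lia.
case: s => [|x s] //= /andP [/eqP hs /andP [hx ha]].
exists (x, s); split => //=; first by rewrite mem_iota; lia.
by rewrite IH ha andbT; apply/eqP; case: hs.
Qed.

Lemma uniq_all_seqs l m : uniq (all_seqs l m).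
Proof.
elim: l => [|l IH] //=.
apply: allpairs_uniq => //; first exact: iota_uniq.
by move=> [x s] [y t] _ _ /= [-> ->].
Qed.

Lemma mem_candidates n s :
  (s \in candidates n) = (0 < size s <= n) && all (fun x => 0 < x <= n) s.
Proof.
rewrite /candidates; apply/flattenP/idP.
  case=> t /mapP [len]; rewrite mem_iota => hl -> .
  rewrite mem_all_seqs => /andP [/eqP hs ->]; rewrite hs andbT; lia.
case/andP => hs ha; exists (all_seqs (size s) n).
  by apply/mapP; exists (size s) => //; rewrite mem_iota; lia.
by rewrite mem_all_seqs eqxx.
Qed.

Lemma uniq_candidates n : uniq (candidates n).
Proof.
rewrite /candidates.
suff H : forall k j, uniq (flatten [seq all_seqs len n | len <- iota k j]) by [].
move=> k j; elim: j k => [|j IH] k //=.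
rewrite cat_uniq uniq_all_seqs IH andbT /=.
apply/hasPn => s /flattenP [t /mapP [len]]; rewrite mem_iota => hl -> .
rewrite mem_all_seqs => /andP [/eqP hs _].
rewrite mem_all_seqs hs; apply/negP => /andP [/eqP h _]; lia.
Qed.

Lemma count_iotaS (P : pred nat) m :
  count P (iota 0 m.+1) = count P (iota 0 m) + P m.
Proof. by rewrite -addn1 iotaD count_cat /= addn0. Qed.

Lemma count_iota_le (P : pred nat) m k :
  m <= k -> count P (iota 0 m) <= count P (iota 0 k).
Proof. by move=> /subnKC <-; rewrite iotaD count_cat leq_addr. Qed.

Lemma nth_lt X i j x y : is_nth X i x -> is_nth X j y -> x < y -> i < j.
Proof.
move=> /andP [hx /eqP hi] /andP [hy /eqP hj] hxy.
rewrite -hi -hj; have := @count_iota_le X _ _ hxy.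
by rewrite count_iotaS hx addn1.
Qed.

Arguments nth_lt {X i j x y}.

Lemma nth_uniq X i x y : is_nth X i x -> is_nth X i y -> x = y.
Proof.
move=> h1 h2; apply/eqP; rewrite eqn_leq; apply/andP; split;
rewrite leqNgt; apply/negP => h.
  by have := nth_lt h2 h1 h; rewrite ltnn.
by have := nth_lt h1 h2 h; rewrite ltnn.
Qed.

Arguments nth_uniq {X i x y}.

Lemma nth_mono X i j x y : is_nth X i x -> is_nth X j y -> i <= j -> x <= y.
Proof.
move=> h1 h2 hij; rewrite leqNgt; apply/negP => h.
have := nth_lt h2 h1 h; lia.
Qed.

Arguments nth_mono {X i j x y}.

Definition idx (X : pred nat) a := count X (iota 0 a).

Definition gmap (S T : pred nat) a := find (is_nth T (idx S a)) (iota 0 a.+1).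

Lemma gmap_spec (S T : pred nat)
  (hST : forall i a, is_nth S i a -> exists2 b, is_nth T i b & b <= a) a :
  S a -> is_nth T (idx S a) (gmap S T a) && (gmap S T a <= a).
Proof.
move=> ha.
have [b hb hba] := hST (idx S a) a (introT andP (conj ha (eqxx _))).
have hh : has (is_nth T (idx S a)) (iota 0 a.+1).
  by apply/hasP; exists b => //; rewrite mem_iota; lia.
have := hh; rewrite has_find size_iota => hlt.
have := nth_find 0 hh; rewrite nth_iota // add0n /gmap => ->.
by [].
Qed.



Arguments gmap_spec {S T} hST {a}.

Definition fmap (S T : pred nat) (s : seq nat) : seq nat :=
  match s with
  | [::] => [::]
  | a :: s' => gmap S T a :: (map (gmap S T) s' ++
                 nseq (a - gmap S T a) (gmap S T (last a s')))
  end.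

Lemma foldr_max_le x s : all (fun y => y <= x) s -> foldr maxn 0 s <= x.
Proof. elim: s => //= y s IH /andP [hy hs]; rewrite geq_max hy IH //. Qed.

Lemma largest_sorted a s : sorted geq (a :: s) -> largest_part (a :: s) = a.
Proof.
rewrite /= path_sortedE; last by move=> x y z; rewrite /geq => h1 h2; lia.
case/andP => ha _; rewrite /largest_part /=.
apply/maxn_idPl; apply: foldr_max_le; apply: sub_all ha => y; by [].
Qed.

Lemma path_nseq m c : path geq c (nseq m c).
Proof. by elim: m => //= m ->; rewrite leqnn. Qed.

Lemma map_inj_all (S : pred nat) (g : nat -> nat) :
  {in S &, injective g} ->
  forall s1 s2, all S s1 -> all S s2 -> map g s1 = map g s2 -> s1 = s2.
Proof.
move=> hg; elim=> [|x s1 IH] [|y s2] //= /andP [hx h1] /andP [hy h2] [hxy hs].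
by rewrite (hg _ _ hx hy hxy) (IH _ h1 h2 hs).
Qed.

Theorem theorem1p3 (S T : pred nat)
  (hS : forall x, S x -> 0 < x) (hT : forall x, T x -> 0 < x)
  (hST : forall i a, is_nth S i a -> exists2 b, is_nth T i b & b <= a) :
  forall n, 1 <= n -> r S n <= r T n.
Proof.
move=> n hn.
set g := gmap S T.
have gT : forall a, S a -> T (g a).
  by move=> a /(gmap_spec hST) /andP [/andP [] ].
have gle : forall a, S a -> g a <= a.
  by move=> a /(gmap_spec hST) /andP [].
have gmono : {in S &, {homo g : x y / geq x y >-> geq x y}}.
  move=> x y hx hy hxy; have {}hx : S x := hx; have {}hy : S y := hy.
  have /andP [h1 _] := gmap_spec hST hx.
  have /andP [h2 _] := gmap_spec hST hy.
  apply: (nth_mono h2 h1); exact: count_iota_le.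
have ginj : {in S &, injective g}.
  move=> x y hx hy hxy; have {}hx : S x := hx; have {}hy : S y := hy.
  have /andP [h1 _] := gmap_spec hST hx.
  have /andP [h2 _] := gmap_spec hST hy.
  have e : idx S x = idx S y.
    by move: h1 h2; rewrite -/g hxy /is_nth => /andP [_ /eqP <-] /andP [_ /eqP <-].
  apply: (@nth_uniq S (idx S x)); first by rewrite /is_nth hx eqxx.
  by rewrite /is_nth hy e eqxx.
rewrite /r -!size_filter.
set LS := filter _ (candidates n); set LT := filter _ (candidates n).
have key : forall s, s \in LS ->
   exists (a : nat) (s' : seq nat), [/\ s = a :: s', S a, all S s', sorted geq (a :: s')
                    & all (fun x => 0 < x) (a :: s') /\ (a + (size s').+1).-1 = n].
  move=> s; rewrite mem_filter => /andP [/and3P [/andP [hsort hpos] hall /eqP hp]].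
  rewrite mem_candidates => /andP [/andP [hsz _] _].
  case: s hsz hsort hpos hall hp => [|a s'] //= _ hsort hpos /andP [ha hall] hp.
  exists a, s'; split => //.
  by rewrite -hp /perimeter largest_sorted.
rewrite -(size_map (fmap S T)).
apply: uniq_leq_size.
  rewrite map_inj_in_uniq; first by apply: filter_uniq; exact: uniq_candidates.
  move=> s1 s2 /key [a [s1' [-> ha hs1 _ _]]] /key [b [s2' [-> hb hs2 _ _]]].
  rewrite /= -/g => [[hab]].
  have eab := ginj _ _ ha hb hab; subst b.
  move=> e.
  have hsz : size s1' = size s2'.
    by have := congr1 size e; rewrite !size_cat !size_map !size_nseq => /addIn.
  have := congr1 (take (size s1')) e.
  rewrite take_size_cat ?size_map // hsz take_size_cat ?size_map // => hm.
  by rewrite (@map_inj_all S g ginj _ _ hs1 hs2 hm).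
move=> t /mapP [s /key [a [s' [-> ha hs' hsort [hpos hp]]]] ->].
rewrite /= -/g.
set c := g (last a s').
have hsortf : sorted geq (g a :: (map g s' ++ nseq (a - g a) c)).
  rewrite /= cat_path /c -(last_map g) path_nseq andbT.
  by apply: (homo_path_in gmono) => //=; rewrite ha.
have hlast : S (last a s').
  by have := mem_last a s'; rewrite inE => /orP [/eqP -> //| /(allP hs')].
have hallT : all T (g a :: (map g s' ++ nseq (a - g a) c)).
  rewrite /= gT // all_cat all_nseq gT // orbT andbT.
  by rewrite all_map; apply: sub_all hs' => x /gT.
have hga := gle a ha.
have hgpos := hT _ (gT _ ha).
have hposf : all (fun x => 0 < x) (g a :: (map g s' ++ nseq (a - g a) c)).
  by apply: sub_all hallT => x /hT.
have hper : perimeter (g a :: (map g s' ++ nseq (a - g a) c)) = n.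
  by rewrite /perimeter largest_sorted // /= size_cat size_map size_nseq -hp !addnS /= addnCA subnKC // addnC.
rewrite /LT mem_filter /is_partition hsortf hposf hallT hper eqxx /=.
rewrite mem_candidates /= size_cat size_map size_nseq.
apply/andP; split; first lia.
have hle : all (geq (g a)) (map g s' ++ nseq (a - g a) c).
  move: (hsortf); rewrite /= path_sortedE; first by case/andP.
  by move=> x y z; rewrite /geq => h1 h2; lia.
have hgn : g a <= n.
  move: hper; rewrite /perimeter (@largest_sorted _ _ hsortf) /= size_cat size_map size_nseq addnS /= => <-; exact: leq_addr.
rewrite hgpos hgn /=.
apply/allP => x hx; apply/andP; split.
  by apply: (allP hposf); rewrite inE hx orbT.
by have := allP hle x hx; rewrite /geq => h; exact: leq_trans h hgn.
Qed.
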